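(* Let $k\ge1$ and let $(T,o)$ be a valid finite rooted tree. If $K\subset V(T)$ satisfies $m(K,T)>0$ and $v_0\in V(T)\setminus K$, then $m(K\cup\{v_0\},T)<m(K,T)$.
   Context: Trees. For a finite rooted tree $(T,o)$, the height of a vertex is its distance from $o$ and the height of $T$ is the maximal height of a vertex. Vertices of even (odd) height are called even (odd); $V(T)$ and $U(T)$ denote the sets of even and odd vertices. $(T,o)$ is valid if its height is even and every odd vertex has degree exactly $k+1$ in $T$. For $K\subset V(T)$, $m(K,T)$ is the number of matchings of $T$ in which every vertex of $K\cup U(T)$ is saturated. *)

(* Defs.v *)
From mathcomp Require Import all_boot.
Set Implicit Arguments. Unset Strict Implicit. Unset Printing Implicit Defensive.

Section Trees.
Variable V : finType.
Variable e : rel V.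

Definition simple_graph := symmetric e /\ irreflexive e.

Fixpoint ball (u : V) (n : nat) : {set V} :=
  match n with
  | 0 => [set u]
  | n'.+1 => ball u n' :|: [set y | [exists x in ball u n', e x y]]
  end.

Definition connected_graph := forall u v : V, v \in ball u #|V|.

Definition acyclic := forall c : seq V, uniq c -> 3 <= size c -> ~~ cycle e c.

Definition is_tree := [/\ simple_graph, connected_graph & acyclic].

(* graph distance (for connected graphs): least n with v within distance n *)
Definition dist (u v : V) : nat := find (fun n => v \in ball u n) (iota 0 #|V|).

Definition height (o v : V) : nat := dist o v.

Definition tree_height (o : V) : nat := \max_(v : V) height o v.

Definition even_vertices (o : V) : {set V} := [set v | ~~ odd (height o v)].
Definition odd_vertices (o : V) : {set V} := [set v | odd (height o v)].

Definition deg (v : V) : nat := #|[set y | e v y]|.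

Definition valid (o : V) (k : nat) :=
  ~~ odd (tree_height o) /\ forall v, v \in odd_vertices o -> deg v = k.+1.

Definition is_edge (s : {set V}) := [exists x, exists y, e x y && (s == [set x; y])].

Definition is_matching (M : {set {set V}}) :=
  [forall s in M, is_edge s] &&
  [forall s in M, forall t in M, (s != t) ==> [disjoint s & t]].

Definition saturates (M : {set {set V}}) (v : V) := [exists s in M, v \in s].

Definition mcount (o : V) (K : {set V}) : nat :=
  #|[set M : {set {set V}} | is_matching M &&
      [forall v in K :|: odd_vertices o, saturates M v]]|.

End Trees.

(* Main.v *)
Require Import Defs.
From mathcomp Require Import all_boot zify.
Set Implicit Arguments. Unset Strict Implicit. Unset Printing Implicit Defensive.

Section Heights.
Variable V : finType.
Variable e : rel V.
Variable o : V.
Hypothesis sym : symmetric e.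
Hypothesis irr : irreflexive e.
Hypothesis conn : connected_graph e.
Hypothesis acyc : acyclic e.

Local Notation h := (height e o).

Lemma ball_mono m n : m <= n -> ball e o m \subset ball e o n.
Proof.
move/subnKC <-; elim: (n - m) => [|d IH]; first by rewrite addn0.
by rewrite addnS (subset_trans IH) //= subsetUl.
Qed.

Lemma h_in v : v \in ball e o (h v).
Proof.
rewrite /height /dist; case: (boolP (has (fun n => v \in ball e o n) (iota 0 #|V|))) => H.
  have := nth_find 0 H; rewrite nth_iota ?add0n //.
  by rewrite -{2}(size_iota 0 #|V|) -has_find.
by rewrite (hasNfind H) size_iota; apply: conn.
Qed.

Lemma h_min m v : m < h v -> v \notin ball e o m.
Proof.
rewrite /height /dist => Hm.
have := before_find 0 Hm; rewrite nth_iota ?add0n ?Hm //.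
  by move=> ->.
by apply: leq_trans Hm _; rewrite -{2}(size_iota 0 #|V|) find_size.
Qed.

Lemma in_ballE n v : (v \in ball e o n) = (h v <= n).
Proof.
case: leqP => H; first by apply: (subsetP (ball_mono H)); apply: h_in.
by apply/negbTE/h_min.
Qed.

Lemma h_edge x y : e x y -> h y <= (h x).+1.
Proof.
move=> exy; rewrite -in_ballE /= in_setU; apply/orP; right.
by rewrite inE; apply/existsP; exists x; rewrite in_ballE leqnn exy.
Qed.

Lemma h0 v : h v = 0 -> v = o.
Proof. by move=> H; have := h_in v; rewrite H /= inE => /eqP. Qed.

Lemma h_o : h o = 0.
Proof. by apply/eqP; rewrite -leqn0 -in_ballE /= inE. Qed.

Lemma h_par v : 0 < h v -> exists x, e x v && (h x == (h v).-1).
Proof.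
case Ev: (h v) => [|n] // _.
have Hn : v \notin ball e o n by apply: h_min; rewrite Ev.
have := h_in v; rewrite Ev /= in_setU (negbTE Hn) /= inE.
case/existsP => x /andP[Hx exv]; exists x; rewrite exv /=.
rewrite in_ballE in Hx; have := h_edge exv; rewrite Ev ltnS => H2.
by rewrite eqn_leq Hx.
Qed.

Definition par v := if [pick x | e x v && (h x == (h v).-1)] is Some x then x else v.

Lemma par_spec v : 0 < h v -> e (par v) v /\ h (par v) = (h v).-1.
Proof.
move=> Hv; rewrite /par; case: pickP => [x /andP[-> /eqP ->] //|H].
by case: (h_par Hv) => x Hx; rewrite H in Hx.
Qed.

Lemma h_par_eq v : h (par v) = (h v).-1.
Proof.
case: (posnP (h v)) => Hv; last by case: (par_spec Hv).
rewrite /par; case: pickP => [x /andP[exv /eqP Hx]|_]; last by rewrite Hv.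
have Hx0 : h x = 0 by rewrite Hx Hv.
by move: exv; rewrite (h0 Hv) (h0 Hx0) irr.
Qed.

Lemma h_iter i v : h (iter i par v) = h v - i.
Proof. by elim: i => [|i IH]; rewrite ?subn0 //= h_par_eq IH subnS. Qed.

Lemma path_par m x : m <= h x -> path e x (traject par (par x) m).
Proof.
elim: m x => [//|m IH] x Hm /=.
have [Hp Hh] := par_spec (leq_trans (ltn0Sn m) Hm).
rewrite sym Hp /=; apply: IH; rewrite Hh; lia.
Qed.

Lemma path_par_rev m y : m <= h y -> path e (iter m par y) (rev (traject par y m)).
Proof.
elim: m => [//|m IH] Hm.
rewrite trajectSr rev_rcons /= IH ?andbT; last by lia.
have Hpos : 0 < h (iter m par y) by rewrite h_iter; lia.
have [Hp _] := par_spec Hpos.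
by rewrite /= Hp.
Qed.

Lemma in_traject_h m x y : y \in traject par x m -> exists2 i, i < m & (y = iter i par x /\ h y = h x - i).
Proof. by case/trajectP => i Hi ->; exists i => //; rewrite h_iter. Qed.

Lemma uniq_traject m x : m <= (h x).+1 -> uniq (traject par x m).
Proof.
elim: m x => [//|m IH] x Hm /=; rewrite IH ?andbT; last by rewrite h_par_eq; lia.
apply/negP => /in_traject_h[i Hi [Hy]].
rewrite h_par_eq; lia.
Qed.

Lemma h_neq x y : e x y -> h x != h y.
Proof.
move=> exy; apply/negP => /eqP Hxy.
have Ex : exists i, iter i par x == iter i par y.
  exists (h x); apply/eqP.
  have H1 : h (iter (h x) par x) = 0 by rewrite h_iter subnn.
  have H2 : h (iter (h x) par y) = 0 by rewrite h_iter Hxy subnn.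
  by rewrite (h0 H1) (h0 H2).
case: (ex_minnP Ex) => t /eqP Ht Hmin.
have [Wx _] := Ex.
have Htx : t <= h x.
  apply: Hmin; apply/eqP.
  have H1 : h (iter (h x) par x) = 0 by rewrite h_iter subnn.
  have H2 : h (iter (h x) par y) = 0 by rewrite h_iter Hxy subnn.
  by rewrite (h0 H1) (h0 H2).
case: t Ht Hmin Htx => [|t] Ht Hmin Htx.
  by move: exy; rewrite /= in Ht; rewrite Ht irr.
set c := traject par x t.+2 ++ rev (traject par y t.+1).
have Hcyc : cycle e c.
  have Ly z : last z (rev (traject par y t.+1)) = y by rewrite trajectS rev_cons last_rcons.
  have Pc a b l : path e a (b :: l) = e a b && path e b l by [].
  rewrite (cycle_path x) /c last_cat Ly cat_path trajectS Pc sym exy path_par //.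
  rewrite last_cons last_traject Ht path_par_rev //.
  by rewrite -Hxy.
have Hs : 3 <= size c.
  rewrite size_cat size_rev !size_traject; lia.
suff Hu : uniq c by move: (acyc Hu Hs); rewrite Hcyc.
rewrite cat_uniq rev_uniq uniq_traject ?uniq_traject //; last by rewrite -Hxy; lia.
rewrite has_rev andbT; apply/hasPn => z /in_traject_h[j Hj [Hz1 Hz2]].
apply/negP => /in_traject_h[i Hi [Hz3 Hz4]].
have Eij : i = j by rewrite Hxy in Hz4; lia.
subst i; have := Hmin j; rewrite -Hz1 -Hz3 eqxx => /(_ isT); lia.
Qed.

Lemma parity_edge x y : e x y -> odd (h y) = ~~ odd (h x).
Proof.
move=> exy; have := h_neq exy; have := h_edge exy.
have eyx : e y x by rewrite sym.
have := h_edge eyx; case: (ltngtP (h x) (h y)) => H // H1 H2 _.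
  by have -> : h y = (h x).+1 by lia.
have -> : h x = (h y).+1 by lia.
by rewrite /= negbK.
Qed.
End Heights.
Section Match.
Variable V : finType.
Variable e : rel V.
Hypothesis sym : symmetric e.
Hypothesis irr : irreflexive e.
Hypothesis acyc : acyclic e.

Lemma match_rem (M : {set {set V}}) a b : is_matching e M -> [set a; b] \in M ->
  is_matching e (M :\ [set a; b]) /\
  (forall v, saturates (M :\ [set a; b]) v = saturates M v && (v \notin [set a; b])).
Proof.
case/andP => /forall_inP HE /forall_inP HD Hab; split.
- apply/andP; split; apply/forall_inP => s; rewrite in_setD1 => /andP[_ Hs]; first exact: HE.
  apply/forall_inP => t; rewrite in_setD1 => /andP[_ Ht]; exact: (forall_inP (HD s Hs) t Ht).
- move=> v; apply/existsP/andP.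
  + case=> s /andP[]; rewrite in_setD1 => /andP[Hsab Hs] Hv; split.
      by apply/existsP; exists s; rewrite Hs.
    have := forall_inP (HD s Hs) _ Hab; rewrite Hsab /= => Hd.
    by rewrite (disjointFr Hd Hv).
  + case=> /existsP[s /andP[Hs Hv]] Hn; exists s; rewrite in_setD1 Hs Hv !andbT.
    by apply/eqP => E; rewrite -E Hv in Hn.
Qed.

Lemma match_add (M : {set {set V}}) a b : is_matching e M -> e a b ->
  ~~ saturates M a -> ~~ saturates M b ->
  is_matching e (M :|: [set [set a; b]]) /\
  (forall v, saturates (M :|: [set [set a; b]]) v = saturates M v || (v \in [set a; b])).
Proof.
case/andP => /forall_inP HE /forall_inP HD eab Ha Hb.
have Hdj t : t \in M -> [disjoint t & [set a; b]].
  move=> Ht; rewrite disjoint_subset; apply/subsetP => z Hz; rewrite !inE.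
  apply/negP => /orP[] /eqP Ez; subst z.
    by move/negP: Ha; apply; apply/existsP; exists t; rewrite Ht.
  by move/negP: Hb; apply; apply/existsP; exists t; rewrite Ht.
split.
- apply/andP; split; apply/forall_inP => s; rewrite in_setU in_set1 => /orP[Hs|/eqP->].
  + exact: HE.
  + by apply/existsP; exists a; apply/existsP; exists b; rewrite eab eqxx.
  + apply/forall_inP => t; rewrite in_setU in_set1 => /orP[Ht|/eqP->].
      exact: (forall_inP (HD s Hs) t Ht).
    by rewrite Hdj ?implybT.
  + apply/forall_inP => t; rewrite in_setU in_set1 => /orP[Ht|/eqP->]; last by rewrite eqxx.
    by rewrite disjoint_sym Hdj ?implybT.
- move=> v; apply/existsP/orP.
  + case=> s /andP[Hs Hv]; move: Hs; rewrite [s \in _]in_setU [s \in [set _]]in_set1 => /orP[Hs|/eqP Es].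
      by left; apply/existsP; exists s; rewrite Hs.
    by right; rewrite -Es.
  + case=> [/existsP[s /andP[Hs Hv]]|Hv].
      by exists s; rewrite Hv andbT in_setU Hs.
    by exists [set a; b]; rewrite Hv andbT in_setU in_set1 eqxx orbT.
Qed.

Lemma partner (M : {set {set V}}) w : is_matching e M -> saturates M w ->
  exists u, e w u /\ [set w; u] \in M.
Proof.
case/andP => /forall_inP HE _ /existsP[s /andP[Hs Hw]].
case/existsP: (HE s Hs) => x /existsP[y /andP[exy /eqP Es]].
move: Hw; rewrite Es !inE => /orP[] /eqP ->.
  by exists y; rewrite exy -Es.
by exists x; rewrite sym exy setUC -Es.
Qed.

Lemma no_back a q u w : uniq (a :: q) -> path e a q -> u \notin a :: q ->
  e (last a q) u -> e u w -> w != last a q -> w \notin a :: q.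
Proof.
move=> Hu Hp Hun exu euw Hwx; apply/negP => Hw.
have [p1 [p2 E]] : exists p1 p2, a :: q = p1 ++ w :: p2.
  by case/splitPr: Hw => p1 p2; exists p1, p2.
have [Hp2 Hl] : path e w p2 /\ last a q = last w p2.
  case: p1 E => [|b p1] /= [E1 E2]; subst; first by [].
  move: Hp; rewrite cat_path => /andP[_] /= /andP[_ ->]; split => //.
  by rewrite last_cat.
have Hu2 : uniq (w :: p2) by move: Hu; rewrite E cat_uniq => /and3P[].
have Hun2 : u \notin w :: p2 by move: Hun; rewrite E mem_cat negb_or => /andP[].
have p2n : 0 < size p2 by case: p2 Hl {E Hp2 Hu2 Hun2} => //= Hl; rewrite Hl eqxx in Hwx.
have Hc : cycle e (rcons (w :: p2) u).
  have -> : cycle e (rcons (w :: p2) u) = path e w (rcons (rcons p2 u) w) by [].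
  by rewrite !rcons_path last_rcons Hp2 -Hl exu euw.
have Hs : 3 <= size (rcons (w :: p2) u) by rewrite size_rcons /=; lia.
have Hu3 : uniq (rcons (w :: p2) u) by rewrite rcons_uniq Hun2 Hu2.
by move: (acyc Hu3 Hs); rewrite Hc.
Qed.


Lemma uniq_size (s : seq V) : uniq s -> size s <= #|V|.
Proof. by move=> U; rewrite -(card_uniqP U) max_card. Qed.

Variable hh : V -> nat.
Hypothesis Hparity : forall x y, e x y -> odd (hh y) = ~~ odd (hh x).
Hypothesis Hdeg : forall u x, odd (hh u) -> e u x -> exists w, e u w && (w != x).

Lemma flip n : forall a q (M : {set {set V}}) u,
  #|V| < size q + n -> uniq (a :: q) -> path e a q -> is_matching e M ->
  e (last a q) u -> [set last a q; u] \in M -> u \notin a :: q -> ~~ odd (hh (last a q)) ->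
  {in a :: q, forall y, y != last a q -> ~~ saturates M y} ->
  exists M' z, [/\ is_matching e M', z \notin a :: q &
     forall v, saturates M' v = (saturates M v && (v != last a q)) || (v == z)].
Proof.
elim: n => [|n IH] a q M u Hs Hu Hp HM exu Hxu Hun Hev Hsat.
  by move: (uniq_size Hu) => /= H; rewrite addn0 in Hs; have := ltn_trans H Hs; rewrite ltnn.
set x := last a q in exu Hxu Hev Hsat *.
have Hodd : odd (hh u) by rewrite (Hparity exu) Hev.
have eux : e u x by rewrite sym.
have [w /andP[euw Hwx]] := Hdeg Hodd eux.
have Hwq : w \notin a :: q by apply: (no_back Hu Hp Hun exu euw Hwx).
have Hwu : w != u by apply/eqP => E; rewrite E irr in euw.
have Hux : u != x by apply/eqP => E; rewrite E irr in exu.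
have [HM1 Hs1] := match_rem HM Hxu.
set M1 := M :\ [set x; u] in HM1 Hs1 *.
have Hsu : saturates M u by apply/existsP; exists [set x; u]; rewrite Hxu !inE eqxx orbT.
case Sw: (saturates M w).
- have Sw1 : saturates M1 w by rewrite Hs1 Sw !inE negb_or Hwx Hwu.
  have [u' [ewu' Hwu'1]] := partner HM1 Sw1.
  have Hlast : last a (q ++ [:: u; w]) = w by rewrite last_cat.
  have Hun1 y : y \in a :: q ++ [:: u; w] -> y != w -> ~~ saturates M1 y.
    rewrite -cat_cons mem_cat => /orP[Hy|]; last first.
      rewrite !inE => /orP[] /eqP ->; last by rewrite eqxx.
      by move=> _; rewrite Hs1 !inE eqxx orbT andbF.
    move=> _; rewrite Hs1; case: (eqVneq y x) => [->|Hyx]; first by rewrite !inE eqxx andbF.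
    by rewrite (negbTE (Hsat y Hy Hyx)).
  have Hu'n : u' \notin a :: q ++ [:: u; w].
    apply/negP => Hu'; have Hu'w : u' != w by apply/eqP => E; rewrite E irr in ewu'.
    have := Hun1 u' Hu' Hu'w; apply/negP; rewrite negbK.
    by apply/existsP; exists [set w; u']; rewrite Hwu'1 !inE eqxx orbT.
  have [|||||||||M2 [z [HM2 Hz Hs2]]] := IH a (q ++ [:: u; w]) M1 u'.
  + rewrite size_cat /= -addnA; apply: (leq_trans Hs); by rewrite leq_add2l add2n.
  + rewrite -cat_cons cat_uniq Hu /= (negbTE Hun) (negbTE Hwq) /= !inE eq_sym Hwu.
    by [].
  + by rewrite cat_path Hp /= exu euw.
  + exact: HM1.
  + by rewrite Hlast.
  + by rewrite Hlast.
  + exact: Hu'n.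
  + by rewrite Hlast (Hparity euw) Hodd.
  + by move=> y Hy; rewrite Hlast; apply: Hun1.
  have Hzu : z != u by apply: contraNneq Hz => ->; rewrite -cat_cons mem_cat !inE eqxx orbT.
  have Hzw : z != w by apply: contraNneq Hz => ->; rewrite -cat_cons mem_cat !inE eqxx !orbT.
  have Su2 : ~~ saturates M2 u.
    by rewrite Hs2 Hlast Hs1 !inE eqxx orbT /= andbF (eq_sym u z) (negbTE Hzu).
  have Sw2 : ~~ saturates M2 w by rewrite Hs2 Hlast eqxx andbF (eq_sym w z) (negbTE Hzw).
  have [HM' Hs'] := match_add HM2 euw Su2 Sw2.
  exists (M2 :|: [set [set u; w]]), z; split => //.
    by apply: contra Hz; rewrite -cat_cons mem_cat => ->.
  move=> v; rewrite Hs' Hs2 Hlast Hs1 !inE.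
  case: (eqVneq v u) => [->|Hvu]; first by rewrite Hsu Hux /= ?orbT ?orTb.
  case: (eqVneq v w) => [->|Hvw]; first by rewrite Sw Hwx /= ?orbT ?orTb.
  case: (eqVneq v x) => [->|Hvx]; first by rewrite /= ?andbT ?andbF ?orbF ?orbT ?orTb.
  by rewrite /= ?andbT ?andbF ?orbF ?orbT ?orTb.
- have Sw1 : ~~ saturates M1 w by rewrite Hs1 Sw.
  have Su1 : ~~ saturates M1 u by rewrite Hs1 !inE eqxx orbT andbF.
  have [HM' Hs'] := match_add HM1 euw Su1 Sw1.
  exists (M1 :|: [set [set u; w]]), w; split => //.
  move=> v; rewrite Hs' Hs1 !inE.
  case: (eqVneq v u) => [->|Hvu]; first by rewrite Hsu Hux /= ?orbT ?orTb.
  case: (eqVneq v w) => [->|Hvw]; first by rewrite /= ?orbT ?orTb.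
  case: (eqVneq v x) => [->|Hvx]; first by rewrite /= ?andbT ?andbF ?orbF ?orbT ?orTb.
  by rewrite /= ?andbT ?andbF ?orbF ?orbT ?orTb.
Qed.

End Match.

Theorem claim2p10 (V : finType) (e : rel V) (o : V) (k : nat) :
  1 <= k -> is_tree e -> valid e o k ->
  forall K : {set V}, K \subset even_vertices e o ->
  0 < mcount e o K ->
  forall v0 : V, v0 \in even_vertices e o -> v0 \notin K ->
  mcount e o (v0 |: K) < mcount e o K.
Proof.
move=> k1 [[sym irr] conn acyc] [_ Hval] K _ Hpos v0 Hv0 Hv0K.
have Hpar : forall x y, e x y -> odd (height e o y) = ~~ odd (height e o x).
  by move=> x y; apply: parity_edge.
have Hdeg : forall u x, odd (height e o u) -> e u x -> exists w, e u w && (w != x).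
  move=> u x Hu eux; case: (pickP [pred w | e u w && (w != x)]) => [w Hw|H]; first by exists w.
  have Hsub : [set y | e u y] \subset [set x].
    apply/subsetP => y; rewrite !inE => euy; have := H y; rewrite /= euy /=.
    by move/negbFE.
  have := subset_leq_card Hsub; rewrite cards1.
  have -> : #|[set y | e u y]| = k.+1 by apply: Hval; rewrite inE.
  by rewrite ltnS leqNgt k1.
case/card_gt0P: Hpos => M; rewrite inE => /andP[HM /forall_inP Hsat].
rewrite /mcount; apply: proper_card; apply/properP; split.
  apply/subsetP => N; rewrite !inE => /andP[-> /forall_inP HN] /=.
  apply/forall_inP => v Hv; apply: HN; move: Hv; rewrite !inE => /orP[H|H]; by rewrite H ?orbT.
have HvK v : v \in K :|: odd_vertices e o -> v != v0.
  rewrite !inE => /orP[Hv|Hv]; apply/eqP => E; subst v; first by rewrite Hv in Hv0K.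
  by move: Hv0; rewrite inE Hv.
case Sv0: (saturates M v0).
- have [u [ev0u Hin]] := partner sym HM Sv0.
  have Hun : u \notin [:: v0] by rewrite inE; apply/eqP => E; rewrite E irr in ev0u.
  have Hev : ~~ odd (height e o v0) by move: Hv0; rewrite inE.
  have [|||||||||M' [z [HM' Hz Hs']]] := flip sym irr acyc Hpar Hdeg (n := #|V|.+1) (a := v0) (q := [::]) (M := M) (u := u).
  + by rewrite /= add0n ltnSn.
  + by [].
  + by [].
  + exact: HM.
  + exact: ev0u.
  + exact: Hin.
  + exact: Hun.
  + exact: Hev.
  + by move=> y; rewrite inE => /eqP ->; rewrite /= eqxx.
  exists M'.
    rewrite inE HM' /=; apply/forall_inP => v Hv.
    by rewrite Hs' /= Hsat // HvK.
  rewrite inE negb_and HM' /=; apply/forall_inPn; exists v0; first by rewrite !inE eqxx.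
  rewrite Hs' /= eqxx andbF /=.
  by move: Hz; rewrite inE eq_sym.
- exists M; first by rewrite inE HM; apply/forall_inP.
  rewrite inE negb_and HM /=; apply/forall_inPn; exists v0; first by rewrite !inE eqxx.
  by rewrite Sv0.
Qed.
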